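(* Let $0\le j<n$ and let $(\mu^k)_{k\ge0}$ be the $\lambda^{j^*}$-building functions. For every transition $\mathbf e=(c,w,c')\in\mathcal E_j$ and every $i\in[n]$, $\mu^{|V|}_i(\mathbf e)\le|V|\cdot\kappa$, where $\kappa=\max_{e\in E}\ell_e(n)$.
   Context: Dynamic NCG $(\mathcal A,n)$: arena $\mathcal A=(V,E,\mathsf{src},\mathsf{tgt})$, $V$ finite, $E$ a partial function from $V\times V$ to non-decreasing piecewise-affine functions $\mathbb N\to\mathbb N$ (edge $e$ has cost $\ell_e$); $\mathsf{tgt}$ has only a self-loop of cost $0$ and is reachable from all states; players $[n]$. Configurations are maps $[n]\to V$; $c_{\mathsf{tgt}}$ maps all to $\mathsf{tgt}$. A move vector $(e_i)_i$ from $c$ gives the transition $(c,w,c')$, $c'(i)$ the target of $e_i$, $w(i)=\ell_{e_i}(u_i)$ with $u_i=|\{l:e_l=e_i\}|$; $\mathrm{cost}_i(c,c')=w(i)$; $T$ is the set of transitions; $c\Rightarrow c'$ means $(c,w,c')\in T$. For a path $\rho=(t_k)$, $\rho_{\ge k}$ is its suffix from $t_k$ and $\mathrm{cost}_i(\rho)$ the total payment of $i$. $\mathrm{dev}_i(c,c')=\{c''\mid c\Rightarrow c'',\ c''(l)=c'(l)\ \forall l\ne i\}$. $X_m$: configurations with exactly $m$ players at $\mathsf{tgt}$; $X_{\ge m}=\bigcup_{m'\ge m}X_{m'}$; $\mathcal E_m$, $\mathcal E_{\ge m}$: transitions $(c,w,c')$ with $c\in X_m$, resp. $c\in X_{\ge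 m}$. For $\lambda=(\lambda_i)$, $\lambda_i:\mathcal E_{\ge m}\to\mathbb N\cup\{\pm\infty\}$, and $c\in X_{\ge m}$, $\Lambda_\lambda(c)$ is the set of paths $\rho=(t_k)$ from $c$ visiting $c_{\mathsf{tgt}}$ with $\mathrm{cost}_i(\rho_{\ge k})\le\lambda_i(t_k)$ for all $i,k$. Define $\lambda^{n^*}_i(c_{\mathsf{tgt}},0^n,c_{\mathsf{tgt}})=0$; for $j<n$ the $\lambda^{j^*}$-building functions $\mu^k_i:\mathcal E_{\ge j}\to\mathbb N\cup\{\pm\infty\}$ are: $\mu^k_i=\lambda^{(j+1)^*}_i$ on $\mathcal E_{\ge j+1}$; for $\mathbf e=(c,w,c')\in\mathcal E_j$, $\mu^0_i(\mathbf e)=0$ if $c(i)=\mathsf{tgt}$ else $+\infty$; for $k>0$, $\mu^k_i(\mathbf e)=0$ if $c(i)=\mathsf{tgt}$, otherwise $\min_{c''\in\mathrm{dev}_i(c,c')}\sup_{\rho\in\Lambda_{\mu^{k-1}}(c'')}(\mathrm{cost}_i(c,c'')+\mathrm{cost}_i(\rho))$ if $\Lambda_{\mu^{k-1}}(\tilde c)\ne\emptyset$ for all $(c,\tilde w,\tilde c)\in T$, and $-\infty$ otherwise; $\lambda^{j^*}$ is the pointwise limit of $(\mu^k)_k$. *)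

(* Defs.v *)
From HB Require Import structures.
From mathcomp Require Import all_boot all_order all_algebra.
From mathcomp Require Import all_classical all_reals all_analysis.
From mathcomp Require Import Rstruct Rstruct_topology.
Set Implicit Arguments. Unset Strict Implicit. Unset Printing Implicit Defensive.
Import Order.TTheory GRing.Theory Num.Theory.

Local Open Scope classical_set_scope.
Local Open Scope ring_scope.
Local Open Scope ereal_scope.

Notation eR := (\bar (Rdefinitions.R : realType)).

(* piecewise affine: finitely many breakpoints [bs]; on each piece (indexed by
   the number of breakpoints <= x) f is x |-> a*x + b with a b : nat *)
Definition pw_affine (f : nat -> nat) : Prop :=
  exists (bs : seq nat) (coef : nat -> nat * nat), forall x : nat,
    f x = ((coef (count (fun t => t <= x)%N bs)).1 * x
           + (coef (count (fun t => t <= x)%N bs)).2)%N.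

Definition nondecr (f : nat -> nat) : Prop := forall x y, (x <= y)%N -> (f x <= f y)%N.

Section NCG.
Variables (V : finType) (E : V -> V -> option (nat -> nat)) (tgt : V) (n : nat).

Definition edge_rel : rel V := fun u v => isSome (E u v).

Definition arena_ok : Prop :=
  [/\ forall u v f, E u v = Some f -> nondecr f /\ pw_affine f,
      (exists f, E tgt tgt = Some f /\ forall x, f x = 0%N),
      (forall v, v != tgt -> E tgt v = None) &
      (forall v, connect edge_rel v tgt)].

Definition config := {ffun 'I_n -> V}.
Definition c_tgt : config := [ffun => tgt].

Definition trans (c c' : config) : bool := [forall i, edge_rel (c i) (c' i)].

Definition load (c c' : config) (i : 'I_n) : nat :=
  #|[set l | (c l == c i) && (c' l == c' i)]|.

Definition cost (c c' : config) (i : 'I_n) : nat :=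
  match E (c i) (c' i) with Some f => f (load c c' i) | None => 0%N end.

Definition ntgt (c : config) : nat := #|[set i | c i == tgt]|.

Definition dev (i : 'I_n) (c c' c'' : config) : bool :=
  trans c c'' && [forall l, (l != i) ==> (c'' l == c' l)].

(* a function lambda_i on transitions, represented on pairs (c, c')
   (the weight vector w is determined by c and c') *)
Definition tfun := config -> config -> 'I_n -> eR.

Definition is_path (c : config) (rho : nat -> config) : Prop :=
  rho 0%N = c /\ forall k, trans (rho k) (rho k.+1).

Definition cost_from (rho : nat -> config) (k : nat) (i : 'I_n) : eR :=
  ereal_sup (range (fun N : nat =>
    ((\sum_(k <= t < N) cost (rho t) (rho t.+1) i)%N%:R)%:E)).

Definition Lambda (lam : tfun) (c : config) : set (nat -> config) :=
  [set rho | is_path c rho /\ (exists N, rho N = c_tgt) /\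
     forall i k, cost_from rho k i <= lam (rho k) (rho k.+1) i].

(* the lambda^{m*}-building functions mu^k, given prev = lambda^{(m+1)*} *)
Fixpoint mu (m : nat) (prev : tfun) (k : nat) : tfun :=
  fun c c' i =>
    if (m < ntgt c)%N then prev c c' i
    else match k with
    | 0%N => if c i == tgt then 0 else +oo
    | k'.+1 =>
      if c i == tgt then 0 else
      if `[< forall ct, trans c ct -> Lambda (mu m prev k') ct !=set0 >] then
        \big[Order.min/+oo]_(c'' | dev i c c' c'')
          ereal_sup [set ((cost c c'' i)%:R)%:E + cost_from rho 0%N i
                    | rho in Lambda (mu m prev k') c'']
      else -oo
    end.

(* lambda^{(n-d)*}: lambda^{n*} is 0 (on the unique transition of E_n);
   lambda^{m*} is the pointwise limit of its building functions. *)
Fixpoint lamd (d : nat) : tfun :=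
  match d with
  | 0%N => fun _ _ _ => 0
  | d'.+1 => fun c c' i => limn (fun k => mu (n - d'.+1) (lamd d') k c c' i)
  end.

Definition lam_star (m : nat) : tfun := lamd (n - m).

Definition kappa : nat :=
  (\max_(u : V) \max_(v : V) match E u v with Some f => f n | None => 0 end)%N.

End NCG.

(* Main.v *)
Require Import Defs.
From HB Require Import structures.
From mathcomp Require Import all_boot all_order all_algebra.
From mathcomp Require Import all_classical all_reals all_analysis.
From mathcomp Require Import Rstruct Rstruct_topology.
Import Order.TTheory GRing.Theory Num.Theory.
Local Open Scope ring_scope.
Local Open Scope ereal_scope.
Local Open Scope classical_set_scope.

Section Proof.
Variables (V : finType) (E : V -> V -> option (nat -> nat)) (tgt : V) (n : nat).
Hypothesis HA : arena_ok E tgt.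

Definition reach (v : V) (N : nat) : Prop :=
  exists p : seq V, [/\ path (edge_rel E) v p, last v p = tgt & size p = N].

Lemma cost_le_kappa (c c'' : config V n) i : (cost E c c'' i <= kappa E n)%N.
Proof.
case: HA => Hnd _ _ _.
rewrite /cost /kappa.
apply: (@leq_trans (match E (c i) (c'' i) with Some f => f n | None => 0%N end)).
  case HE: (E (c i) (c'' i)) => [f|] //.
  have [Hf _] := Hnd _ _ _ HE; apply: Hf.
  rewrite /load; apply: leq_trans (max_card _) _; by rewrite card_ord.
apply: leq_trans
  (@leq_bigmax _ (fun v => match E (c i) v with Some f => f n | None => 0%N end) (c'' i)) _.
exact: (@leq_bigmax _ (fun u => \max_(v : V) match E u v with Some f => f n | None => 0%N end) (c i)).
Qed.

Lemma ntgt_mono (c c' : config V n) : trans E c c' -> (ntgt tgt c <= ntgt tgt c')%N.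
Proof.
case: HA => _ _ Hnone _ Ht.
rewrite /ntgt; apply: subset_leq_card; apply/fintype.subsetP => l.
rewrite !inE /= => /eqP Hl.
move/forallP: Ht => /(_ l); rewrite Hl /edge_rel.
have [//|Hne] := eqVneq (c' l) tgt.
by rewrite Hnone.
Qed.

Lemma Lambda_mono (l1 l2 : tfun V n) c :
  (forall a b i, l1 a b i <= l2 a b i) -> (Lambda E tgt l1 c `<=` Lambda E tgt l2 c)%classic.
Proof.
move=> H rho [Hp [HN Hc]]; split => //; split => // i k.
exact: le_trans (Hc i k) (H _ _ _).
Qed.

Lemma mu_decr m prev k : forall c c' i,
  @mu V E tgt n m prev k.+1 c c' i <= @mu V E tgt n m prev k c c' i.
Proof.
elim: k => [|k IH] c c' i.
  rewrite /=; case: ifP => // _; case: ifP => // _; exact: leey.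
rewrite [X in X <= _]/=.
rewrite [X in _ <= X]/=.
case: ifP => // _; case: ifP => // _.
have Hsub := fun ct => @Lambda_mono _ _ ct IH.
case: (asboolP (forall ct, trans E c ct -> Lambda E tgt (@mu V E tgt n m prev k.+1) ct !=set0)) => H2; last exact: leNye.
case: asboolP => H1; last first.
  exfalso; apply: H1 => ct Hct; case: (H2 ct Hct) => x Hx; exists x; exact: Hsub.
apply: le_bigmin; first exact: leey.
move=> c'' Hd; apply: le_trans (bigmin_le_cond _ _ Hd) _.
apply: le_ereal_sup; apply: image_subset; exact: Hsub.
Qed.

Lemma mu_bound m (prev : tfun V n) i
  (Hprev : forall (c c' : config V n) N, trans E c c' -> (m < ntgt tgt c)%N ->
     reach (c i) N -> prev c c' i <= ((N * kappa E n)%N%:R)%:E) :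
  forall k (c c' : config V n) N, trans E c c' -> (m <= ntgt tgt c)%N ->
     reach (c i) N -> (N <= k)%N ->
     @mu V E tgt n m prev k c c' i <= ((N * kappa E n)%N%:R)%:E.
Proof.
elim=> [|k IH] c c' N Ht Hm Hr HN.
  rewrite /=; case: ifP => Hlt; first exact: Hprev.
  move: HN; rewrite leqn0 => /eqP HN; subst N.
  case: Hr => p [_ Hl Hs]; move/size0nil: Hs => Hs; subst p.
  by move: Hl => /= ->; rewrite eqxx.
rewrite /=; case: ifP => Hlt; first exact: Hprev.
case: ifP => Hci; first by rewrite lee_fin.
case: asboolP => _; last exact: leNye.
case: Hr => [[|w p]] [Hp Hl Hs].
  by move: Hl Hci => /= ->; rewrite eqxx.
move: Hp => /= /andP [Hew Hp].
set c0 : config V n := [ffun l => if l == i then w else c' l].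
have Hc0i : c0 i = w by rewrite ffunE eqxx.
have Ht0 : trans E c c0.
  apply/forallP => l; rewrite ffunE; case: eqP => [->|_] //.
  by move/forallP: Ht.
have Hd : dev E i c c' c0.
  rewrite /dev Ht0 /=; apply/forallP => l; apply/implyP => Hli.
  by rewrite ffunE (negbTE Hli).
apply: le_trans (bigmin_le_cond _ _ Hd) _.
apply: ge_ereal_sup => _ [rho [[H0 Hpath] [_ Hc]] <-].
have Hr0 := Hc i 0%N; rewrite H0 in Hr0.
have Hb : @mu V E tgt n m prev k c0 (rho 1%N) i <= (((size p) * kappa E n)%N%:R)%:E.
  apply: IH.
  - by rewrite -H0; apply: Hpath.
  - by apply: leq_trans Hm _; apply: ntgt_mono.
  - by exists p; split => //; rewrite Hc0i.
  - by rewrite -ltnS; move: Hs HN => /= ->.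
rewrite -Hs mulSn natrD EFinD.
apply: leeD; last exact: le_trans Hr0 Hb.
by rewrite lee_fin ler_nat cost_le_kappa.
Qed.

Lemma lamd_bound d : (d <= n)%N -> forall (c c' : config V n) i N,
  trans E c c' -> (n - d <= ntgt tgt c)%N -> reach (c i) N ->
  @lamd V E tgt n d c c' i <= ((N * kappa E n)%N%:R)%:E.
Proof.
elim: d => [|d IH] Hd c c' i N Ht Hm Hr.
  by rewrite /= lee_fin ler0n.
rewrite /=.
set u := fun k => @mu V E tgt n (n - d.+1) (@lamd V E tgt n d) k c c' i.
have Hdec : {homo u : a b / (a <= b)%N >-> b <= a}.
  move=> a b; elim: b => [|b IHb]; first by rewrite leqn0 => /eqP ->.
  rewrite leq_eqVlt => /orP [/eqP -> //|]; rewrite ltnS => Hab.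
  exact: le_trans (mu_decr _ _ _ _ _ _) (IHb Hab).
have Hcv := ereal_nonincreasing_cvgn Hdec.
rewrite (cvg_lim _ Hcv) //.
apply: le_trans (ereal_inf_lbound (ex_intro2 _ _ N I erefl)) _.
rewrite /u; apply: mu_bound => //.
move=> a b M Hab Hlt Hra; apply: IH => //; first exact: ltnW.
by move: Hlt; rewrite -subSn //.
Qed.

Lemma reach_short v : exists2 N, reach v N & (N <= #|V|)%N.
Proof.
case: HA => _ _ _ Hc.
move/connectP: (Hc v) => [p Hp Hl].
case: (shortenP Hp) Hl => p' Hp' Hu _ Hl.
exists (size p'); first by exists p'.
apply: leq_trans (max_card (mem (v :: p'))).
by move/card_uniqP: Hu => ->.
Qed.

End Proof.

Theorem lemmaC7 (V : finType) (E : V -> V -> option (nat -> nat)) (tgt : V)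
  (n : nat) (j : nat) :
  arena_ok E tgt ->
  (j < n)%N ->
  forall (c c' : config V n), trans E c c' -> ntgt tgt c = j ->
  forall i : 'I_n,
    @mu V E tgt n j (@lam_star V E tgt n j.+1) #|V| c c' i
      <= ((#|V| * kappa E n)%N%:R)%:E.
Proof.
move=> HA Hj c c' Ht Hn i.
case: (@reach_short V E tgt HA (c i)) => N Hr HN.
apply: le_trans (@mu_bound V E tgt n HA j (@lam_star V E tgt n j.+1) i _ #|V| c c' N Ht _ Hr HN) _.
- move=> a b M Hab Hlt Hra; apply: (@lamd_bound V E tgt n HA) => //; first exact: leq_subr.
  by rewrite subKn.
- by rewrite Hn.
- by rewrite lee_fin ler_nat leq_mul2r HN orbT.
Qed.
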